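(* Let $q\in\mathbb{C}\setminus\{0,1,-1\}$ and let $a,a^\dagger,N$ be operators satisfying $$aa^\dagger-q\,a^\dagger a=q^{-N},\qquad a^\dagger a=[N],\qquad [N,a]=-a,\qquad [N,a^\dagger]=a^\dagger,$$ where $[X]=\frac{q^{X}-q^{-X}}{q-q^{-1}}$. For $m\in\mathbb{Z}$ put $L_m=-q^{N}(a^\dagger)^{m+1}a$. Define brackets recursively: for $m,k\in\mathbb{Z}$, $$\llbracket L_m,L_k\rrbracket=q^{m-k}L_mL_k-q^{k-m}L_kL_m,$$ and for $n\ge 3$ and $i_1,\dots,i_n\in\mathbb{Z}$, $$\llbracket L_{i_1},\dots,L_{i_n}\rrbracket=\sum_{s=1}^{n}(-1)^{s+1}\,q^{x_n i_s+y_n\sum_{l\neq s}i_l}\,L_{i_s}\,\llbracket L_{i_1},\dots,\widehat{L_{i_s}},\dots,L_{i_n}\rrbracket,$$ where the hat denotes omission, the product on the right is the ordinary operator product, and $(x_3,y_3)=(2,-1)$, $(x_n,y_n)=(n,0)$ for even $n\ge4$, $(x_n,y_n)=(n-1,-2)$ for odd $n\ge5$. Then for every $n\ge 3$ and all $i_1,\dots,i_n\in\mathbb{Z}$, $$\llbracket L_{i_1},\dots,L_{i_n}\rrbracket=\frac{\mathrm{sign}(n)}{(q-q^{-1})^{n-1}}\det\Big(q^{2\left(r-\lfloor\frac{n-1}{2}\rfloor\right)i_j}\Big)_{0\le r\le n-1,\;1\le j\le n}\;L_{i_1+\cdots+i_n},$$ i.e. the rows of the $n\times n$ matrix have exponents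 $-2\lfloor\frac{n-1}{2}\rfloor i_j,\,2(-\lfloor\frac{n-1}{2}\rfloor+1)i_j,\dots,2\lfloor\frac n2\rfloor i_j$ in column $j$, where $\mathrm{sign}(n)=1$ if $n\equiv0,1\pmod 4$ and $\mathrm{sign}(n)=-1$ if $n\equiv 2,3\pmod 4$, and $\lfloor\cdot\rfloor$ is the floor function.
   Context: The operators $a,a^\dagger,N$ form a $q$-deformed oscillator. The two-entry bracket is the $q$-commutator $[A,B]_{(p,r)}=pAB-rBA$ with $(p,r)=(q^{m-k},q^{k-m})$; with it the $L_m$ satisfy $[L_m,L_k]_{(q^{m-k},q^{k-m})}=[m-k]L_{m+k}$ (the $q$-deformed Virasoro–Witt algebra). *)

(* Defs.v *)
From HB Require Import structures.
From mathcomp Require Import all_boot all_order all_algebra.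
From mathcomp Require Import complex.
From mathcomp Require Import reals.
Set Implicit Arguments. Unset Strict Implicit. Unset Printing Implicit Defensive.
Import Order.TTheory GRing.Theory Num.Theory.
Local Open Scope ring_scope.

Section QVir.
Variables (C : fieldType) (A : unitAlgType C).
(* q : deformation parameter, Q stands for the operator q^N,
   a, ad stand for a and a^dagger. *)
Variables (q : C) (Q ad a : A).

Definition Lop (m : int) : A := - (Q * ad ^ (m + 1) * a).

Definition rem_at (T : Type) (j : nat) (s : seq T) : seq T :=
  take j s ++ drop j.+1 s.

Definition xy (n : nat) : int * int :=
  if n == 3%N then (2, -1)
  else if ~~ odd n then ((n : int), 0)
  else ((n : int) - 1, -2).

Definition bracket2 (m k : int) : A :=
  q ^ (m - k) *: (Lop m * Lop k) - q ^ (k - m) *: (Lop k * Lop m).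

(* nbr n s : the n-ary bracket [[L_{s_0},...,L_{s_{n-1}}]] (meaningful for
   n = size s >= 2). *)
Fixpoint nbr (n : nat) (s : seq int) {struct n} : A :=
  match n with
  | 0%N => 0
  | n1.+1 =>
    match n1 with
    | 0%N => 0
    | 1%N => bracket2 (nth 0 s 0) (nth 0 s 1)
    | _ =>
      \sum_(j < n)
        ((-1) ^+ j * q ^ ((xy n).1 * nth 0 s j
                          + (xy n).2 * \sum_(l <- rem_at j s) l))
          *: (Lop (nth 0 s j) * nbr n1 (rem_at j s))
    end
  end.

Definition bracket (s : seq int) : A := nbr (size s) s.

End QVir.

Definition sign_n (C : ringType) (n : nat) : C :=
  if (n %% 4 < 2)%N then 1 else -1.

Definition qmat (C : fieldType) (q : C) (n : nat) (s : seq int) : 'M[C]_n :=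
  \matrix_(r < n, j < n)
     q ^ (2 * ((r : int) - ((n.-1)./2 : int)) * nth 0 s j).

(* Main.v *)
Require Import Defs.
From HB Require Import structures.
From mathcomp Require Import all_boot all_order all_algebra.
From mathcomp Require Import complex.
From mathcomp Require Import reals.
From mathcomp Require Import ring zify.
Import Order.TTheory GRing.Theory Num.Theory.
Set Implicit Arguments. Unset Strict Implicit. Unset Printing Implicit Defensive.
Local Open Scope ring_scope.

Lemma comm_exprz (C : fieldType) (A : unitAlgType C) (x y : A) (c : C) :
  x \is a GRing.unit -> c != 0 -> y * x = c *: (x * y) ->
  forall j : int, y * x ^ j = c ^ j *: (x ^ j * y).
Proof.
move=> ux c0 hyx.
have hn : forall n : nat, y * x ^+ n = c ^+ n *: (x ^+ n * y).
  elim=> [|n IH]; first by rewrite !expr0 mul1r mulr1 scale1r.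
  by rewrite exprSr mulrA IH -scalerAl -[in LHS]mulrA hyx -scalerAr scalerA mulrA -!exprSr.
case=> n; first exact: hn.
rewrite NegzE -!invr_expz /=.
have un : x ^+ n.+1 \is a GRing.unit by rewrite unitrX.
have cn : c ^+ n.+1 != 0 by rewrite expf_neq0.
have e : x ^+ n.+1 * y = (c ^+ n.+1)^-1 *: (y * x ^+ n.+1).
  by rewrite hn scalerA mulVf // scale1r.
have -> : x ^ (n.+1 : int) = x ^+ n.+1 by [].
have -> : c ^ (n.+1 : int) = c ^+ n.+1 by [].
by rewrite -{1}(mulKr un y) e -scalerAr -scalerAl -!mulrA mulrV // mulr1.
Qed.

Definition Fq (C : fieldType) (A : unitAlgType C) (q : C) (Q : A) (j : int) : A :=
  (q - q^-1)^-1 *: (q ^ j *: Q - q ^ (- j) *: Q^-1).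

Lemma Fq_ad (C : fieldType) (A : unitAlgType C) (q : C) (Q ad : A) :
  q != 0 -> Q \is a GRing.unit -> Q * ad = q *: (ad * Q) ->
  forall j : int, Fq q Q j * ad = ad * Fq q Q (j + 1).
Proof.
move=> q0 uQ hQad j.
have hQi : Q^-1 * ad = q^-1 *: (ad * Q^-1).
  apply: (canLR (mulKr uQ)); rewrite -scalerAr mulrA hQad -scalerAl scalerA mulVf //.
  by rewrite scale1r -mulrA mulrV // mulr1.
rewrite /Fq -scalerAl -scalerAr; congr (_ *: _).
rewrite mulrBl mulrBr -!scalerAl -!scalerAr hQad hQi !scalerA.
by rewrite !expfzDr // ?expr1z opprD expfzDr // exprN1.
Qed.

Lemma a_adz (C : fieldType) (A : unitAlgType C) (q : C) (Q ad a : A) :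
  q != 0 -> Q \is a GRing.unit -> Q * ad = q *: (ad * Q) ->
  ad \is a GRing.unit -> ad * a = (q - q^-1)^-1 *: (Q - Q^-1) ->
  forall j : int, a * ad ^ j = ad ^ (j - 1) * Fq q Q j.
Proof.
move=> q0 uQ hQad uad hrel j.
have FA := Fq_ad q0 uQ hQad.
have P0 : a * ad ^ 0 = ad ^ (0 - 1) * Fq q Q 0.
  rewrite /Fq oppr0 !expr0z !scale1r -hrel sub0r -invr_expz expr1z mulr1.
  by rewrite mulKr.
have up : forall j, a * ad ^ j = ad ^ (j - 1) * Fq q Q j ->
     a * ad ^ (j + 1) = ad ^ (j + 1 - 1) * Fq q Q (j + 1).
  move=> k Pk; rewrite exprzDr // expr1z mulrA Pk -mulrA FA mulrA -{2}(expr1z ad).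
  by rewrite -exprzDr // subrK addrK.
have dn : forall j, a * ad ^ j = ad ^ (j - 1) * Fq q Q j ->
     a * ad ^ (j - 1) = ad ^ (j - 1 - 1) * Fq q Q (j - 1).
  move=> k0 Pk.
  have e : Fq q Q k0 * ad^-1 = ad^-1 * Fq q Q (k0 - 1).
    by apply: (canLR (mulrK uad)); rewrite -mulrA FA subrK mulKr.
  have h1 : ad ^ (-1) = ad^-1 by [].
  rewrite exprzDr // mulrA Pk -mulrA h1 e mulrA -h1.
  by rewrite -exprzDr.
have hn : forall n : nat, a * ad ^ (n:int) = ad ^ ((n:int) - 1) * Fq q Q (n:int) /\
     a * ad ^ (- (n:int)) = ad ^ (- (n:int) - 1) * Fq q Q (- (n:int)).
  elim=> [|n [IH1 IH2]]; first by rewrite oppr0.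
  split; first by rewrite -addn1 PoszD up.
  by rewrite -addn1 PoszD opprD dn.
by case: j => n; [case: (hn n) | rewrite NegzE; case: (hn n.+1)].
Qed.

Lemma LL (C : fieldType) (A : unitAlgType C) (q : C) (Q ad a : A) :
  q != 0 -> q - q^-1 != 0 -> Q \is a GRing.unit -> Q * ad = q *: (ad * Q) ->
  Q * a = q^-1 *: (a * Q) ->
  ad \is a GRing.unit -> ad * a = (q - q^-1)^-1 *: (Q - Q^-1) ->
  forall m k : int, Lop Q ad a m * Lop Q ad a k =
    (q - q^-1)^-1 *: (q ^ (-2 * m) *: (Q ^+ 3 * ad ^ (m + k + 1) * a)
                      + Lop Q ad a (m + k)).
Proof.
move=> q0 c0 uQ hQad hQa uad hrel m k.
have hqq : q * q - 1 != 0 by rewrite -(mulfV q0) -mulrBr mulf_neq0.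
have cA : forall X, X * a * Q = q *: (X * Q * a).
  move=> X; rewrite -!mulrA scalerAr; congr (X * _).
  by rewrite hQa scalerA mulfV // scale1r.
have hQj := comm_exprz uad q0 hQad.
have cB : forall X (j : int), X * ad ^ j * Q = q ^ (- j) *: (X * Q * ad ^ j).
  move=> X j; rewrite -!mulrA scalerAr; congr (X * _).
  by rewrite hQj scalerA -expfzDr // addNr expr0z scale1r.
have cBi : forall X (j : int), X * ad ^ j * Q^-1 = q ^ j *: (X * Q^-1 * ad ^ j).
  move=> X j; rewrite -!mulrA scalerAr; congr (X * _).
  by rewrite -{1}(mulKr uQ (ad ^ j)) hQj -scalerAr -scalerAl !mulrA mulrK.
have cC : forall X (j : int), X * a * ad ^ j = X * ad ^ (j - 1) * Fq q Q j.
  by move=> X j; rewrite -mulrA (a_adz q0 uQ hQad uad hrel) mulrA.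
have cD : forall X (i j : int), X * ad ^ i * ad ^ j = X * ad ^ (i + j).
  by move=> X i j; rewrite -mulrA -exprzDr.
rewrite /Lop mulrNN !mulrA cA -!scalerAl cB -!scalerAl cC cD.
have -> : m + 1 + (k + 1 - 1) = m + k + 1 by ring.
rewrite /Fq -!scalerAr -!scalerAl mulrBr -!scalerAr mulrBl -!scalerAl cB cBi.
rewrite -!scalerAl mulrK // -(expr2 Q) -exprSr.
rewrite !scalerBr !scalerA; congr (_ *: _ - _ *: _).
  have -> : q ^ (-2 * m) = ((q ^ m) ^+ 2)^-1.
    by rewrite mulNr -invr_expz mulrC -exprz_exp.
  rewrite !opprD !expfzDr // -!invr_expz expr1z.
  by field; rewrite q0 hqq !expfz_neq0.
rewrite !opprD !expfzDr // -!invr_expz expr1z.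
by field; rewrite q0 hqq !expfz_neq0.
Qed.

Lemma br2 (C : fieldType) (A : unitAlgType C) (q : C) (Q ad a : A) :
  q != 0 -> q - q^-1 != 0 -> Q \is a GRing.unit -> Q * ad = q *: (ad * Q) ->
  Q * a = q^-1 *: (a * Q) ->
  ad \is a GRing.unit -> ad * a = (q - q^-1)^-1 *: (Q - Q^-1) ->
  forall m k : int, bracket2 q Q ad a m k =
    ((q ^ (m - k) - q ^ (k - m)) / (q - q^-1)) *: Lop Q ad a (m + k).
Proof.
move=> q0 c0 uQ hQad hQa uad hrel m k.
rewrite /bracket2 !(LL q0 c0 uQ hQad hQa uad hrel) (addrC k m).
set X := Q ^+ 3 * _ * a; set L := Lop _ _ _ _.
rewrite !scalerA !scalerDr !scalerA.
have -> : q ^ (m - k) / (q - q^-1) * q ^ (-2 * m) =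
          q ^ (k - m) / (q - q^-1) * q ^ (-2 * k).
  rewrite ![_ / _ * _]mulrAC -!expfzDr //; congr (q ^ _ * _); ring.
by rewrite (opprD (_ *: X)) addrACA subrr add0r -scalerBl mulrBl.
Qed.

Lemma size_rem_at (T : Type) (j : nat) (s : seq T) : (j < size s)%N ->
  size (rem_at j s) = (size s).-1.
Proof.
move=> hj; rewrite /rem_at size_cat size_take hj size_drop; lia.
Qed.

Lemma nth_rem_at (T : Type) (x0 : T) (j k : nat) (s : seq T) : (j < size s)%N ->
  nth x0 (rem_at j s) k = nth x0 s (bump j k).
Proof.
move=> hj; rewrite /rem_at nth_cat size_take hj /bump.
case: ltnP => hk.
  by rewrite nth_take // add0n.
by rewrite nth_drop add1n; congr nth; lia.
Qed.

Lemma sum_rem_at (j : nat) (s : seq int) : (j < size s)%N ->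
  \sum_(l <- rem_at j s) l = \sum_(l <- s) l - nth 0 s j.
Proof.
move=> hj; rewrite /rem_at.
have e : s = take j s ++ nth 0 s j :: drop j.+1 s by rewrite -drop_nth // cat_take_drop.
set x := nth 0 s j; rewrite [in X in _ = X - _]e !big_cat big_cons /=.
rewrite /x; ring.
Qed.

Definition minor (C : fieldType) (q : C) (n : nat) (s : seq int) (j : 'I_n.+1) : 'M[C]_n :=
  row' ord_max (col' j (qmat q n.+1 s)).

Lemma minorE (C : fieldType) (q : C) (n : nat) (s : seq int) (j : 'I_n.+1) r k :
  size s = n.+1 ->
  minor q s j r k = q ^ (2 * (((r : nat) : int) - ((n./2 : nat) : int)) * nth 0 (rem_at j s) k).
Proof.
move=> hs; rewrite /minor !mxE nth_rem_at ?hs ?ltn_ord //= /bump.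
have -> : (n <= r)%N = false by apply/negbTE; rewrite -ltnNge ltn_ord.
by rewrite add0n.
Qed.

Lemma det2 (C : fieldType) (M : 'M[C]_2) :
  \det M = M 0 0 * M 1 1 - M 0 1 * M 1 0.
Proof.
rewrite (expand_det_row _ 0) !big_ord_recl big_ord0 addr0 /cofactor !det_mx11 !mxE /=.
have e1 : lift 0 (0 : 'I_1) = 1 :> 'I_2 by apply/val_inj.
have e2 : lift ord0 (0 : 'I_1) = 1 :> 'I_2 by apply/val_inj.
have e3 : lift (lift ord0 (ord0 : 'I_1)) (0 : 'I_1) = 0 :> 'I_2 by apply/val_inj.
have e4 : lift ord0 (ord0 : 'I_1) = 1 :> 'I_2 by apply/val_inj.
rewrite e3 ?e1 ?e2 ?e4 /bump /=.
rewrite expr0 expr1 mul1r; ring.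
Qed.

Lemma prod_qz (C : fieldType) (q : C) (I : Type) (r : seq I) (P : pred I) (F : I -> int) :
  q != 0 -> \prod_(i <- r | P i) q ^ F i = q ^ (\sum_(i <- r | P i) F i).
Proof.
move=> q0; symmetry.
exact: (big_morph (fun e : int => q ^ e) (fun m n => expfzDr m n q0) (expr0z q)).
Qed.

Lemma det_minor_rel (C : fieldType) (q : C) (n : nat) (s : seq int) (j : 'I_n.+1) :
  q != 0 -> size s = n.+1 ->
  \det (qmat q n (rem_at j s)) =
    q ^ (2 * (((n./2 : nat) : int) - (((n.-1)./2 : nat) : int)) * \sum_(l <- rem_at j s) l)
    * \det (minor q s j).
Proof.
move=> q0 hs.
set d := (((n./2 : nat) : int) - (((n.-1)./2 : nat) : int)).
have hsz : size (rem_at j s) = n by rewrite size_rem_at hs ?ltn_ord.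
have -> : minor q s j = qmat q n (rem_at j s) *m
     diag_mx (\row_k q ^ (-2 * d * nth 0 (rem_at j s) k)).
  apply/matrixP => r k; rewrite minorE // mul_mx_diag !mxE -expfzDr //.
  by congr (q ^ _); rewrite /d; ring.
rewrite det_mulmx det_diag.
under eq_bigr do rewrite mxE.
rewrite prod_qz // -mulr_sumr mulrCA -expfzDr //.
rewrite [X in q ^ (_ + X)](_ : _ = -2 * d * \sum_(l <- rem_at j s) l); last first.
  by rewrite (big_nth 0) hsz big_mkord.
have -> : 2 * d * \sum_(l <- rem_at j s) l + -2 * d * \sum_(l <- rem_at j s) l = 0 by ring.
by rewrite expr0z mulr1.
Qed.

Lemma sgsq (C : fieldType) (n : nat) : (-1) ^+ n * (-1) ^+ n = 1 :> C.
Proof. by rewrite -exprMn mulrNN mulr1 expr1n. Qed.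

Lemma lap1 (C : fieldType) (q : C) (n : nat) (s : seq int) :
  \det (qmat q n.+1 s) = (-1) ^+ n * \sum_(j < n.+1) ((-1) ^+ j *
     q ^ (2 * ((n : int) - ((n./2 : nat) : int)) * nth 0 s j) * \det (minor q s j)).
Proof.
rewrite (expand_det_row _ ord_max) mulr_sumr; apply: eq_bigr => j _.
rewrite /cofactor mxE exprD /minor /=; ring.
Qed.

Lemma lap2 (C : fieldType) (q : C) (n : nat) (s : seq int) : (0 < n)%N ->
  \sum_(j < n.+1) ((-1) ^+ j *
     q ^ (2 * ((n : int) - 1 - ((n./2 : nat) : int)) * nth 0 s j) * \det (minor q s j)) = 0.
Proof.
move=> n0.
set B := \matrix_(r < n.+1, k < n.+1)
   q ^ (2 * (((minn r n.-1 : nat) : int) - ((n./2 : nat) : int)) * nth 0 s k).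
have dB : \det B = 0.
  apply: (@determinant_alternate _ _ _ ord_max (inord n.-1)).
    by rewrite -val_eqE /= inordK; lia.
  move=> k; rewrite !mxE inordK /= ?minnn; last lia.
  by have -> : minn n n.-1 = n.-1 by lia.
move: dB; rewrite (expand_det_row _ ord_max) => dB.
have sn : (-1) ^+ n != 0 :> C by rewrite signr_eq0.
apply: (mulfI sn); rewrite mulr0.
rewrite mulr_sumr -[RHS]dB; apply: eq_bigr => j _; rewrite /cofactor.
have -> : row' ord_max (col' j B) = minor q s j.
  apply/matrixP => r k; rewrite /minor !mxE /=.
  congr (q ^ (_ * _ * _)); rewrite /bump.
  have -> : (n <= r)%N = false by apply/negbTE; rewrite -ltnNge ltn_ord.
  rewrite add0n.
  have h : (r <= n.-1)%N by rewrite -ltnS prednK // ltn_ord.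
  by rewrite (minn_idPl h).
rewrite /B mxE exprD /=.
have -> : ((minn n n.-1 : nat) : int) = (n : int) - 1.
  have -> : minn n n.-1 = n.-1 by lia.
  by rewrite -{2}(prednK n0) -addn1 PoszD addrK.
ring.
Qed.

Lemma sign_step (C : fieldType) (n : nat) :
  sign_n C n * (-1) ^+ n = sign_n C n.+1.
Proof.
rewrite /sign_n {2}(divn_eq n 4) exprD mulnC exprM.
have -> : (-1) ^+ 4 = 1 :> C by rewrite !exprS expr0; ring.
rewrite expr1n mul1r -[n.+1]addn1 -modnDml.
have := ltn_pmod n (isT : (0 < 4)%N).
case: (n %% 4)%N => [|[|[|[|k]]]] // _ /=. all: try rewrite !exprS. all: try rewrite expr0. all: ring.
Qed.

Lemma nbr_unfold (C : fieldType) (A : unitAlgType C) (q : C) (Q ad a : A) n s :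
  (1 < n)%N -> nbr q Q ad a n.+1 s =
   \sum_(j < n.+1)
        ((-1) ^+ j * q ^ ((xy n.+1).1 * nth 0 s j
                          + (xy n.+1).2 * \sum_(l <- rem_at j s) l))
          *: (Lop Q ad a (nth 0 s j) * nbr q Q ad a n (rem_at j s)).
Proof. by case: n => [|[|n]] //. Qed.

Lemma step (C : fieldType) (A : unitAlgType C) (q : C) (Q ad a : A) :
  q != 0 -> q - q^-1 != 0 -> Q \is a GRing.unit -> Q * ad = q *: (ad * Q) ->
  Q * a = q^-1 *: (a * Q) ->
  ad \is a GRing.unit -> ad * a = (q - q^-1)^-1 *: (Q - Q^-1) ->
  forall (n : nat) (s : seq int) (g : 'I_n.+1 -> C),
  (1 < n)%N -> size s = n.+1 ->
  (forall j : 'I_n.+1, nbr q Q ad a n (rem_at j s) =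
      g j *: Lop Q ad a (\sum_(l <- rem_at j s) l)) ->
  (forall j : 'I_n.+1, (-1) ^+ j * q ^ ((xy n.+1).1 * nth 0 s j
        + (xy n.+1).2 * \sum_(l <- rem_at j s) l) * g j
    = sign_n C n / (q - q^-1) ^+ n.-1 * ((-1) ^+ j *
        q ^ (2 * ((n : int) - ((n./2 : nat) : int)) * nth 0 s j) * \det (minor q s j))) ->
  nbr q Q ad a n.+1 s =
    (sign_n C n.+1 / (q - q^-1) ^+ n * \det (qmat q n.+1 s)) *: Lop Q ad a (\sum_(l <- s) l).
Proof.
move=> q0 c0 uQ hQad hQa uad hrel n s g n1 hs hnbr hg.
have LL' := LL q0 c0 uQ hQad hQa uad hrel.
rewrite nbr_unfold //.
set c := q - q^-1.
set K := sign_n C n / c ^+ n.-1.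
set h := ((n./2 : nat) : int).
set X := Q ^+ 3 * ad ^ (\sum_(l <- s) l + 1) * a.
set L := Lop Q ad a (\sum_(l <- s) l).
transitivity (\sum_(j < n.+1) ((K / c * ((-1) ^+ j *
        q ^ (2 * ((n : int) - 1 - h) * nth 0 s j) * \det (minor q s j))) *: X
     + (K / c * ((-1) ^+ j *
        q ^ (2 * ((n : int) - h) * nth 0 s j) * \det (minor q s j))) *: L)).
  apply: eq_bigr => j _.
  rewrite hnbr -scalerAr scalerA hg LL' sum_rem_at ?hs ?ltn_ord // [nth 0 s j + _]addrC subrK.
  rewrite -/c -/X -/L scalerA scalerDr !scalerA; congr (_ *: _ + _ *: _).
    have -> : q ^ (2 * ((n:int) - 1 - h) * nth 0 s j) =
       q ^ (2 * ((n:int) - h) * nth 0 s j) * q ^ (-2 * nth 0 s j).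
      by rewrite -expfzDr //; congr (q ^ _); ring.
    by rewrite /K /h; ring.
  by rewrite /K /h; ring.
rewrite big_split /= -!scaler_suml -!mulr_sumr lap2 ?mulr0 ?scale0r ?add0r; last lia.
congr (_ *: _).
have ec : c ^+ n = c ^+ n.-1 * c by rewrite -exprSr prednK //; lia.
rewrite lap1 -/h -sign_step /K ec invfM.
set S := \sum_(j < n.+1) _.
rewrite [RHS](_ : _ = sign_n C n * ((-1) ^+ n * (-1) ^+ n) / c ^+ n.-1 / c * S); last ring.
by rewrite sgsq mulr1.
Qed.

Lemma xy_int (n : nat) : (3 <= n)%N ->
  (xy n.+1).1 = 2 * ((n : int) - ((n./2 : nat) : int)) /\
  (xy n.+1).2 + 2 * (((n./2 : nat) : int) - (((n.-1)./2 : nat) : int)) = 0.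
Proof.
move=> n3; rewrite /xy.
have -> : (n.+1 == 3%N) = false by apply/negbTE; rewrite eqSS; lia.
have hn := odd_double_half n.
set t := n./2 in hn *.
rewrite /= negbK.
case on: (odd n) in hn *; rewrite /= in hn.
  have e : (n.-1)./2 = t by rewrite -hn add1n /= doubleK.
  rewrite e /=; split; last by rewrite subrr mulr0 addr0.
  rewrite -[in LHS]hn -muln2; lia.
have h1 : (0 < t)%N by rewrite -hn add0n -muln2 in n3 *; lia.
have e : (n.-1)./2 = t.-1.
  by rewrite -hn add0n -(prednK h1) doubleS /= uphalf_double.
rewrite e /=; split.
  rewrite -[in LHS]hn add0n -muln2; lia.
have et : ((t:nat):int) = ((t.-1:nat):int) + 1.
  by rewrite -[in LHS](prednK h1) -addn1 PoszD.
rewrite et; ring.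
Qed.

Lemma base (C : fieldType) (A : unitAlgType C) (q : C) (Q ad a : A) :
  q != 0 -> q - q^-1 != 0 -> Q \is a GRing.unit -> Q * ad = q *: (ad * Q) ->
  Q * a = q^-1 *: (a * Q) ->
  ad \is a GRing.unit -> ad * a = (q - q^-1)^-1 *: (Q - Q^-1) ->
  forall s : seq int, size s = 3%N ->
  nbr q Q ad a 3 s =
    (sign_n C 3 / (q - q^-1) ^+ 2 * \det (qmat q 3 s)) *: Lop Q ad a (\sum_(l <- s) l).
Proof.
move=> q0 c0 uQ hQad hQa uad hrel s hs.
pose g := fun j : 'I_3 => let r := rem_at j s in
  (q ^ (nth 0 r 0 - nth 0 r 1) - q ^ (nth 0 r 1 - nth 0 r 0)) / (q - q^-1).
apply: (step q0 c0 uQ hQad hQa uad hrel (g := g)) => // j.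
  rewrite /g /=.
  have : size (rem_at j s) = 2%N by rewrite size_rem_at hs ?ltn_ord.
  case: (rem_at j s) => [|x [|y []]] //= _.
  by rewrite (br2 q0 c0 uQ hQad hQa uad hrel) !big_cons big_nil addr0.
rewrite det2 !minorE //= /g /xy /=.
have hsz : size (rem_at j s) = 2%N by rewrite size_rem_at hs ?ltn_ord.
rewrite [\sum_(l <- rem_at j s) l](_ : _ = nth 0 (rem_at j s) 0 + nth 0 (rem_at j s) 1); last first.
  by case: (rem_at j s) hsz => [|x [|y []]] //= _; rewrite !big_cons big_nil addr0.
set u := nth 0 (rem_at j s) 0; set v := nth 0 (rem_at j s) 1; set t := nth 0 s j.
have qk : forall (k x : int), q ^ (k * x) = (q ^ x) ^ k.
  by move=> k x; rewrite mulrC exprz_exp.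
have e1 : q ^ (2 * t + -1 * (u + v)) = (q ^ t) ^+ 2 * (q ^ u)^-1 * (q ^ v)^-1.
  have hm1 : forall x : C, x ^ (-1) = x^-1 by [].
  have hp2 : forall x : C, x ^ 2 = x ^+ 2 by [].
  by rewrite expfzDr // !qk hm1 hp2 (expfzDr u v q0) invfM mulrA.
have e2 : forall x y : int, q ^ (x - y) = q ^ x * (q ^ y)^-1.
  by move=> x y; rewrite expfzDr // -invr_expz.
have e4 : q ^ (2 * (2%Z - 1%Z) * t) = (q ^ t) ^+ 2 by rewrite qk.
have e5 : forall x, q ^ (2 * (0%Z - 1%Z) * x) = ((q ^ x) ^+ 2)^-1 by move=> x; rewrite qk.
have e7 : forall x : int, q ^ (2 * (Posz (1 %% 2)%N - 1%Z) * x) = 1 by move=> x; rewrite qk.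
rewrite e1 !e2 e4 !e5 !e7 /sign_n /= expr1.
have := expfz_neq0 u q0; have := expfz_neq0 v q0; have := expfz_neq0 t q0.
move: (q ^ u) (q ^ v) (q ^ t) => U V T hT hV hU.
have hqq : q * q - 1 != 0 by rewrite -(mulfV q0) -mulrBr mulf_neq0.
by field; rewrite hV hU q0 hqq.
Qed.

Lemma mainind (C : fieldType) (A : unitAlgType C) (q : C) (Q ad a : A) :
  q != 0 -> q - q^-1 != 0 -> Q \is a GRing.unit -> Q * ad = q *: (ad * Q) ->
  Q * a = q^-1 *: (a * Q) ->
  ad \is a GRing.unit -> ad * a = (q - q^-1)^-1 *: (Q - Q^-1) ->
  forall (k : nat) (s : seq int), size s = k.+3 ->
  nbr q Q ad a k.+3 s =
    (sign_n C k.+3 / (q - q^-1) ^+ k.+2 * \det (qmat q k.+3 s)) *: Lop Q ad a (\sum_(l <- s) l).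
Proof.
move=> q0 c0 uQ hQad hQa uad hrel k.
elim: k => [|k IH] s hs; first exact: base.
apply: (step q0 c0 uQ hQad hQa uad hrel
   (g := fun j => sign_n C k.+3 / (q - q^-1) ^+ k.+2 * \det (qmat q k.+3 (rem_at j s)))) => // j.
  by apply: IH; rewrite size_rem_at hs ?ltn_ord.
rewrite det_minor_rel //.
have [hx hy] := xy_int (n := k.+3) isT.
set P := q ^ (_ + _); set Z := q ^ (2 * _ * _).
have E : P * Z = q ^ (2 * ((k.+3 : int) - (((k.+3)./2 : nat) : int)) * nth 0 s j).
  rewrite /P /Z -expfzDr //; congr (q ^ _); rewrite hx.
  move/eqP: hy; rewrite addr_eq0 => /eqP ->; ring.
rewrite -E; ring.
Qed.

Theorem theorem3 (R : realType) (A : unitAlgType R[i])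
  (q : R[i]) (N Q ad a : A)
  (hq0 : q != 0) (hq1 : q != 1) (hqm1 : q != -1)
  (* Q plays the role of q^N: invertible, commuting with N, and
     satisfying the functional-calculus consequences of [N,a]=-a,
     [N,a^dagger]=a^dagger *)
  (hQunit : Q \is a GRing.unit) (hQN : Q * N = N * Q)
  (hQa : Q * a = q^-1 *: (a * Q)) (hQad : Q * ad = q *: (ad * Q))
  (* a^dagger invertible, so that (a^dagger)^(m+1) makes sense for m in Z *)
  (hadunit : ad \is a GRing.unit)
  (* the q-oscillator relations *)
  (hrel1 : a * ad - q *: (ad * a) = Q^-1)
  (hrel2 : ad * a = (q - q^-1)^-1 *: (Q - Q^-1))
  (hNa : N * a - a * N = - a)
  (hNad : N * ad - ad * N = ad) :
  forall (n : nat) (s : seq int), (3 <= n)%N -> size s = n ->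
    bracket q Q ad a s =
      (sign_n R[i] n / (q - q^-1) ^+ n.-1 * \det (qmat q n s))
        *: Lop Q ad a (\sum_(i <- s) i).
Proof.
have c0 : q - q^-1 != 0.
  have -> : q - q^-1 = (q - 1) * (q + 1) / q by field.
  by rewrite !mulf_neq0 ?invr_eq0 // ?subr_eq0 // addr_eq0.
move=> n s hn hs; rewrite /bracket hs.
case: n hn hs => [|[|[|k]]] // _ hs.
exact: (mainind hq0 c0 hQunit hQad hQa hadunit hrel2).
Qed.
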